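(* For non-negative integers $p_1,p_2,r$ and $x_1,x_2\in\mathbb{C}$, $$\sum_{l=0}^{p_1+p_2}S_{1,x_1}^{1,x_2,p_2}(p_1,l)\,(-1)^{l}(l+r)!=r!\,(x_1-r-1)^{p_1}(x_2-r-1)^{p_2}.$$ Consequently $B^{(0)}_{p_1,p_2}(x_1,x_2)=(x_1-1)^{p_1}(x_2-1)^{p_2}$ and $B^{(-1)}_{p_1,p_2}(x_1,x_2)=(x_1-2)^{p_1}(x_2-2)^{p_2}$.
   Context: For non-negative integers $p_1,p_2,l$ and $x_1,x_2\in\mathbb{C}$, the generalized Stirling numbers are $$S_{1,x_1}^{1,x_2,p_2}(p_1,l)=\frac{1}{l!}\sum_{j=0}^{l}(-1)^{j}\binom{l}{j}(l-j+x_1)^{p_1}(l-j+x_2)^{p_2}.$$ For an integer $k$, the bi-variate poly-Bernoulli polynomial is $$B^{(k)}_{p_1,p_2}(x_1,x_2)=\sum_{l=0}^{p_1+p_2}S_{1,x_1}^{1,x_2,p_2}(p_1,l)\frac{(-1)^{l}\,l!}{(l+1)^{k}}.$$ *)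

(* Defs.v *)
From mathcomp Require Import all_boot all_order all_algebra.
From mathcomp Require Import complex.
Set Implicit Arguments. Unset Strict Implicit. Unset Printing Implicit Defensive.
Import Order.TTheory GRing.Theory Num.Theory.
Local Open Scope ring_scope.

Definition genStirling {C : comUnitRingType} (x1 x2 : C) (p1 p2 l : nat) : C :=
  (l`!%:R)^-1 * \sum_(0 <= j < l.+1)
     (-1) ^+ j * 'C(l, j)%:R * ((l - j)%:R + x1) ^+ p1 * ((l - j)%:R + x2) ^+ p2.

(* Bi-variate poly-Bernoulli polynomial B^{(k)}_{p1,p2}(x1,x2), k : int;
   1/(l+1)^k is written (l+1)^(-k) (integer exponent). *)
Definition polyBernoulli2 {C : comUnitRingType} (k : int) (p1 p2 : nat) (x1 x2 : C) : C :=
  \sum_(0 <= l < (p1 + p2).+1)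
     genStirling x1 x2 p1 p2 l * ((-1) ^+ l * l`!%:R) * ((l.+1)%:R ^ (- k)).

(* Main.v *)
Require Import Defs.
From mathcomp Require Import all_boot all_order all_algebra.
From mathcomp Require Import complex.
From mathcomp Require Import reals.
From mathcomp Require Import ring lra zify.
Import Order.TTheory GRing.Theory Num.Theory.
Local Open Scope ring_scope.
Section Gen.
Variable C : numFieldType.

Definition ff (n : nat) : {poly C} := \prod_(k < n) ('X - (k%:R)%:P).

Lemma ffS n : ff n.+1 = ff n * ('X - (n%:R)%:P).
Proof. by rewrite /ff big_ord_recr. Qed.

Lemma ff_monic n : ff n \is monic.
Proof. exact: monic_prod_XsubC. Qed.

Lemma size_ff n : size (ff n) = n.+1.
Proof.
elim: n => [|n IH]; first by rewrite /ff big_ord0 size_poly1.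
by rewrite ffS size_Mmonic ?monicXsubC ?monic_neq0 ?ff_monic // IH size_XsubC; lia.
Qed.

Lemma ffE i m : (ff i).[m%:R] = (m ^_ i)%:R.
Proof.
elim: i => [|i IH]; first by rewrite /ff big_ord0 hornerC ffactn0.
rewrite ffS hornerM IH hornerXsubC ffactnSr natrM.
case: (leqP i m) => [him|hmi]; first by rewrite natrB.
by rewrite (ffact_small hmi) !mul0r.
Qed.

Lemma ffN i r : (ff i).[- (r.+1)%:R] * r`!%:R = (-1) ^+ i * (r + i)`!%:R.
Proof.
elim: i => [|i IH]; first by rewrite /ff big_ord0 hornerC mul1r expr0 mul1r addn0.
rewrite ffS hornerM hornerXsubC mulrAC IH addnS factS natrM exprS.
rewrite -!natr1 natrD; ring.
Qed.

Lemma bin_ff (l i j : nat) : (j <= l)%N -> ('C(l, j) * (l - j) ^_ i = l ^_ i * 'C(l - i, j))%N.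
Proof.
move=> hjl.
case: (leqP (j + i) l) => h.
  apply/eqP; rewrite -(eqn_pmul2r (fact_gt0 j)) -(eqn_pmul2r (fact_gt0 (l - j - i))).
  have e1 : ('C(l, j) * (l - j) ^_ i * j`! * (l - j - i)`! = l`!)%N.
    have -> : ('C(l, j) * (l - j) ^_ i * j`! * (l - j - i)`!
       = 'C(l, j) * (j`! * ((l - j) ^_ i * (l - j - i)`!)))%N by ring.
    rewrite ffact_fact; last by lia.
    by rewrite bin_fact.
  have e2 : (l ^_ i * 'C(l - i, j) * j`! * (l - j - i)`! = l`!)%N.
    have -> : (l - j - i = l - i - j)%N by lia.
    rewrite -!mulnA bin_fact; last by lia.
    by rewrite ffact_fact //; lia.
  by rewrite e1 e2.
rewrite ffact_small; last by lia.
rewrite muln0; case: (leqP i l) => hil.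
  by rewrite bin_small ?muln0 //; lia.
by rewrite ffact_small.
Qed.

Lemma delta l i : \sum_(0 <= j < l.+1) (-1) ^+ j * 'C(l, j)%:R * ((l - j) ^_ i)%:R
   = (l == i)%:R * l`!%:R :> C.
Proof.
case: (ltnP l i) => hli.
  rewrite big1; first by rewrite (ltn_eqF hli) mul0r.
  move=> j _; rewrite ffact_small ?mulr0 //; lia.
transitivity (\sum_(0 <= j < l.+1) (l ^_ i)%:R * ((-1) ^+ j * 'C(l - i, j)%:R) : C).
  rewrite !big_nat; apply: eq_bigr => j hj.
  rewrite -mulrA -natrM bin_ff; last by lia.
  by rewrite natrM; ring.
rewrite -mulr_sumr.
have -> : \sum_(0 <= j < l.+1) (-1) ^+ j * ('C(l - i, j))%:R
   = \sum_(j < (l - i).+1) (-1) ^+ j * ('C(l - i, j))%:R :> C.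
  rewrite big_mkord (@big_ord_widen _ 0 +%R (l - i).+1 l.+1 (fun j => (-1) ^+ j * ('C(l - i, j))%:R : C)); last by lia.
  rewrite [RHS]big_mkcond /=; apply: eq_bigr => j _.
  case: ifP => // /negbT; rewrite -leqNgt => h; rewrite bin_small ?mulr0 //.
have := exprDn (1 : C) (-1) (l - i).
rewrite subrr => E.
have -> : \sum_(j < (l - i).+1) (-1) ^+ j * ('C(l - i, j))%:R
        = (0 : C) ^+ (l - i).
  rewrite E; apply: eq_bigr => j _; by rewrite expr1n mul1r mulr_natr.
case: (eqVneq l i) => [->|hne].
  by rewrite subnn expr0 ffactnn !mulr1 mul1r.
rewrite expr0n; have -> : (l - i == 0)%N = false by apply/negbTE; lia.
by rewrite !mulr0 mul0r.
Qed.

Definition Lf (N r : nat) (g : C -> C) : C :=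
  \sum_(0 <= l < N.+1)
    ((l`!%:R)^-1 * \sum_(0 <= j < l.+1) (-1) ^+ j * 'C(l, j)%:R * g (l - j)%:R)
      * ((-1) ^+ l * (l + r)`!%:R).

Lemma eq_Lf N r g h : (forall x, g x = h x) -> Lf N r g = Lf N r h.
Proof.
move=> e; rewrite /Lf; apply: eq_bigr => l _; congr (_ * _ * _).
by apply: eq_bigr => j _; rewrite e.
Qed.

Lemma Lf_lin N r a b c :
  Lf N r (fun x => a x + c * b x) = Lf N r a + c * Lf N r b.
Proof.
rewrite /Lf mulr_sumr -big_split /=; apply: eq_bigr => l _.
have -> : \sum_(0 <= j < l.+1) (-1) ^+ j * ('C(l, j))%:R * (a (l - j)%:R + c * b (l - j)%:R)
  = \sum_(0 <= j < l.+1) (-1) ^+ j * ('C(l, j))%:R * a (l - j)%:R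
    + c * \sum_(0 <= j < l.+1) (-1) ^+ j * ('C(l, j))%:R * b (l - j)%:R.
  rewrite mulr_sumr -big_split /=; apply: eq_bigr => j _; ring.
ring.
Qed.

Lemma Lf0 N r : Lf N r (fun _ => 0) = 0.
Proof.
rewrite /Lf big1 // => l _; rewrite big1 ?mulr0 ?mul0r // => j _; by rewrite mulr0.
Qed.

Lemma Lff N r i : (i <= N)%N -> Lf N r (horner (ff i)) = r`!%:R * (ff i).[- (r.+1)%:R].
Proof.
move=> hiN.
rewrite mulrC ffN /Lf.
under eq_bigr => l _.
  under eq_bigr => j _ do rewrite ffE.
  rewrite delta [X in X * _]mulrCA mulVf ?mulr1; last by rewrite pnatr_eq0 -lt0n fact_gt0.
  over.
rewrite big_mkord (bigD1 (Ordinal (hiN : (i < N.+1)%N))) //= eqxx mul1r big1 ?addr0.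
  by rewrite addnC.
move=> l /negbTE; rewrite -(inj_eq val_inj) /= => ->; by rewrite mul0r.
Qed.

Lemma Lpoly N r (p : {poly C}) : (size p <= N.+1)%N ->
  Lf N r (horner p) = r`!%:R * p.[- (r.+1)%:R].
Proof.
have : (N.+1 <= N.+1)%N by [].
move: {1 3}N.+1 => n; elim: n p => [|n IH] p hn hp.
  move/size_poly_leq0P: hp => ->; rewrite horner0 mulr0.
  by rewrite (@eq_Lf _ _ _ (fun _ => 0)) ?Lf0 // => x; rewrite horner0.
case: (leqP (size p) n) => hs; first by apply: IH => //; lia.
have hsz : size p = n.+1 by lia.
set c := lead_coef p.
set q := p - c *: ff n.
have hq : (size q <= n)%N.
  apply/leq_sizeP => j hj.
  case: (ltnP n j) => hnj.
    rewrite /q coefB coefZ (leq_sizeP _ _ hp) // (leq_sizeP _ _ (eq_leq (size_ff n))) //.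
    by rewrite mulr0 subrr.
  have -> : j = n by lia.
  rewrite /q coefB coefZ.
  have : lead_coef (ff n) = 1 by apply/monicP; exact: ff_monic.
  rewrite lead_coefE size_ff /= => ->.
  by rewrite /c lead_coefE hsz /= mulr1 subrr.
have ep : p = q + c *: ff n by rewrite /q subrK.
rewrite (@eq_Lf _ _ _ (fun x => q.[x] + c * (ff n).[x])); last first.
  by move=> x; rewrite {1}ep hornerD hornerZ.
rewrite Lf_lin IH //; last by lia.
rewrite Lff; last by lia.
have -> : p.[- (r.+1)%:R] = q.[- (r.+1)%:R] + c * (ff n).[- (r.+1)%:R].
  by rewrite {1}ep hornerD hornerZ.
ring.
Qed.
End Gen.

Lemma part1 (C : numFieldType) (p1 p2 r : nat) (x1 x2 : C) :
  \sum_(0 <= l < (p1 + p2).+1)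
      genStirling x1 x2 p1 p2 l * ((-1) ^+ l * (l + r)`!%:R)
    = r`!%:R * (x1 - r%:R - 1) ^+ p1 * (x2 - r%:R - 1) ^+ p2.
Proof.
set f : {poly C} := ('X - (- x1)%:P) ^+ p1 * ('X - (- x2)%:P) ^+ p2.
have hf : forall x, f.[x] = (x + x1) ^+ p1 * (x + x2) ^+ p2.
  by move=> x; rewrite /f hornerM !horner_exp !hornerXsubC !opprK.
have hs : (size f <= (p1 + p2).+1)%N.
  rewrite /f size_Mmonic ?monic_neq0 ?monic_exp ?monicXsubC //.
  rewrite !size_exp_XsubC; lia.

transitivity (@Lf C (p1 + p2)%N r (horner f)).
  rewrite /Lf; apply: eq_bigr => l _; rewrite /genStirling; congr (_ * _ * _).
  by apply: eq_bigr => j _; rewrite hf mulrA.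
rewrite (@Lpoly C) // hf.
have e : forall x : C, - (r.+1)%:R + x = x - r%:R - 1 by move=> x; rewrite -natr1; ring.
by rewrite !e mulrA.
Qed.

Local Open Scope complex_scope.

Theorem mainTheorem7 (R : realType) (p1 p2 r : nat) (x1 x2 : R[i]) :
  (\sum_(0 <= l < (p1 + p2).+1)
      genStirling x1 x2 p1 p2 l * ((-1) ^+ l * (l + r)`!%:R)
    = r`!%:R * (x1 - r%:R - 1) ^+ p1 * (x2 - r%:R - 1) ^+ p2)
  /\ polyBernoulli2 0 p1 p2 x1 x2 = (x1 - 1) ^+ p1 * (x2 - 1) ^+ p2
  /\ polyBernoulli2 (-1) p1 p2 x1 x2 = (x1 - 2%:R) ^+ p1 * (x2 - 2%:R) ^+ p2.
Proof.
split; first exact: part1.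
split.
  have := @part1 _ p1 p2 0 x1 x2; rewrite /= mul1r !subr0 => <-.
  rewrite /polyBernoulli2; apply: eq_bigr => l _.
  by rewrite oppr0 expr0z mulr1 addn0.
have e : forall x : R[i], x - 1%:R - 1 = x - 2%:R by move=> x; rewrite -natr1 /=; ring.
have := @part1 _ p1 p2 1 x1 x2; rewrite /= mul1r !e => <-.
rewrite /polyBernoulli2; apply: eq_bigr => l _.
rewrite opprK expr1z addn1 factS natrM; ring.
Qed.
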